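(* Let $n\ge 2$ and consider $x(t+1)=Ax(t)+Bu(t)$, where the columns of $B\in\mathbb{R}^{n\times m}$ are canonical unit vectors, $T$ is the time horizon, and $\mathcal{W}=\sum_{t=0}^{T-1}A^tBB^{\top}(A^t)^{\top}$ is positive definite. Let $P$ and $\Theta_P$ be as in the context. (a) If $A$ is a directed line network, i.e., its only possibly nonzero entries are $a_{q+1,q}$, $q=1,\dots,n-1$, then every entry of $\Theta_P$ outside the first sub-diagonal is zero. (b) If $A$ is a directed ring network, i.e., its only possibly nonzero entries are $a_{q+1,q}$, $q=1,\dots,n-1$, and $a_{1n}$, then every entry of $\Theta_P$ outside the first sub-diagonal and the entry $(1,n)$ is zero. In both cases $\Theta_P$ has the same sparsity structure as $A$.
   Context: $P$ is one of $I$, $\mathcal{W}^{-1}$, $\mathcal{W}^{-2}$, or $vv^{\top}$ with $v$ a unit eigenvector of $\mathcal{W}$ for a simple eigenvalue. $\Theta_P=\sum_{k=1}^{m}\sum_{t=1}^{T-1}\overline{C}_k^{(t)}\overline{O}_k^{(t)}$, where, with $b_k$ the $k$-th column of $B$, $\overline{C}_k^{(t)}=\begin{pmatrix}(A^{t-1})^{\top}PA^tb_k & \cdots & A^{\top}PA^tb_k & PA^tb_k\end{pmatrix}$ and $\overline{O}_k^{(t)}=\begin{pmatrix}b_k & Ab_k&\cdots&A^{t-1}b_k\end{pmatrix}^{\top}$. Entry $(j,i)$ with $j>i$ lies in the $(j-i)$-th sub-diagonal. *)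

(* Defs.v *)
From HB Require Import structures.
From mathcomp Require Import all_boot all_order all_algebra.
Set Implicit Arguments. Unset Strict Implicit. Unset Printing Implicit Defensive.
Import Order.TTheory GRing.Theory Num.Theory.
Local Open Scope ring_scope.

Section Defs.
Variable R : realFieldType.

Definition canonical_columns n m (B : 'M[R]_(n, m)) : Prop :=
  forall k : 'I_m, exists i : 'I_n, col k B = delta_mx i 0.

Definition gramian n m (A : 'M[R]_n) (B : 'M[R]_(n, m)) (T : nat) : 'M[R]_n :=
  \sum_(t < T) (A ^+ t *m B *m B^T *m (A ^+ t)^T).

Definition posdef n (W : 'M[R]_n) : Prop :=
  W^T = W /\ forall x : 'cV[R]_n, x != 0 -> 0 < (x^T *m W *m x) 0 0.

Definition admissible_P n (W P : 'M[R]_n) : Prop :=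
  P = 1%:M \/ P = invmx W \/ P = invmx W *m invmx W \/
  exists (v : 'cV[R]_n) (lam : R),
    [/\ W *m v = lam *: v, (v^T *m v) 0 0 = 1,
        mup lam (char_poly W) = 1%N & P = v *m v^T].

Definition Cbar n m (A P : 'M[R]_n) (B : 'M[R]_(n, m)) (k : 'I_m) (t : nat)
  : 'M[R]_(n, t) :=
  \matrix_(i < n, j < t) (((A ^+ (t.-1 - j))^T *m P *m A ^+ t *m col k B) i 0).

Definition Obar n m (A : 'M[R]_n) (B : 'M[R]_(n, m)) (k : 'I_m) (t : nat)
  : 'M[R]_(t, n) :=
  \matrix_(j < t, i < n) ((A ^+ j *m col k B) i 0).

Definition ThetaP n m (A P : 'M[R]_n) (B : 'M[R]_(n, m)) (T : nat) : 'M[R]_n :=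
  \sum_(k < m) \sum_(1 <= t < T) (Cbar A P B k t *m Obar A B k t).

(* 0-based indices: entry (i,j) lies on the first sub-diagonal iff i = j+1 *)
Definition line_network n (A : 'M[R]_n) : Prop :=
  forall i j : 'I_n, (i : nat) != j.+1 -> A i j = 0.

Definition ring_network n (A : 'M[R]_n) : Prop :=
  forall i j : 'I_n, (i : nat) != j.+1 -> ~ ((i : nat) = 0%N /\ (j : nat) = n.-1) ->
    A i j = 0.
End Defs.

(* Main.v *)
Require Import Defs.
From HB Require Import structures.
From mathcomp Require Import all_boot all_order all_algebra zify.
Import Order.TTheory GRing.Theory Num.Theory.
Local Open Scope ring_scope.
Set Implicit Arguments. Unset Strict Implicit.

Section S.
Variable R : realFieldType.

Definition rowp a b (X : 'M[R]_(a, b)) := forall p (i l : 'I_b), i != l -> X p i * X p l = 0.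
Definition isd a (X : 'M[R]_a) := forall i j : 'I_a, i != j -> X i j = 0.

Lemma rowp_mul a b c (X : 'M[R]_(a, b)) (Y : 'M[R]_(b, c)) :
  rowp X -> rowp Y -> rowp (X *m Y).
Proof.
move=> hX hY p i l il; rewrite !mxE mulr_suml big1 // => r _.
rewrite mulr_sumr big1 // => r' _.
case: (eqVneq r r') => [<-|rr].
  by rewrite mulrACA hY // mulr0.
by rewrite mulrACA hX // mul0r.
Qed.

Lemma rowp1 a : rowp (1%:M : 'M[R]_a).
Proof.
move=> p i l il; rewrite !mxE.
case: (eqVneq p i) => [->|]; rewrite ?mul0r //.
by rewrite (negbTE il) mulr0.
Qed.

Lemma isd_mul a (X Y : 'M[R]_a) : isd X -> isd Y -> isd (X *m Y).
Proof.
move=> hX hY i j ij; rewrite !mxE big1 // => r _.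
case: (eqVneq i r) => [<-|ir]; first by rewrite hY // mulr0.
by rewrite hX // mul0r.
Qed.

Lemma isd_tmt a (X D : 'M[R]_a) : rowp X -> isd D -> isd (X^T *m D *m X).
Proof.
move=> hX hD i j ij; rewrite !mxE big1 // => r _.
rewrite !mxE mulr_suml big1 // => r' _.
case: (eqVneq r' r) => [->|rr]; last by rewrite hD // mulr0 mul0r.
by rewrite !mxE mulrAC hX // mul0r.
Qed.

Lemma isd_diag_entry a (D : 'M[R]_a) (z : 'cV[R]_a) i : isd D -> (D *m z) i 0 = D i i * z i 0.
Proof.
move=> hD; rewrite mxE (bigD1 i) //= big1 ?addr0 // => r ri.
by rewrite hD ?mul0r // eq_sym.
Qed.

Lemma ring_nz n (A : 'M[R]_n) : ring_network A -> forall i j : 'I_n, A i j != 0 ->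
  (i : nat) = j.+1 \/ ((i : nat) = 0%N /\ (j : nat) = n.-1).
Proof.
move=> hA i j nz; case: (eqVneq (i : nat) j.+1) => [->|h]; first by left.
right; case: (eqVneq (i : nat) 0%N) => [h1|h1].
  case: (eqVneq (j : nat) n.-1) => [h2|h2]; first by [].
  by move: nz; rewrite (hA i j h) ?eqxx // => -[] _ e; move: h2; rewrite e eqxx.
by move: nz; rewrite (hA i j h) ?eqxx // => -[] e _; move: h1; rewrite e eqxx.
Qed.

Lemma ring_rowp n (A : 'M[R]_n) : ring_network A -> rowp A /\ rowp A^T.
Proof.
move=> hA; have H := ring_nz hA.
split=> p i l il.
  case: (eqVneq (A p i) 0) => [->|h1]; first by rewrite mul0r.
  case: (eqVneq (A p l) 0) => [->|h2]; first by rewrite mulr0.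
  have := H _ _ h1; have := H _ _ h2; move: il; rewrite -val_eqE /=.
  have := ltn_ord i; have := ltn_ord l; have := ltn_ord p; lia.
rewrite !mxE.
case: (eqVneq (A i p) 0) => [->|h1]; first by rewrite mul0r.
case: (eqVneq (A l p) 0) => [->|h2]; first by rewrite mulr0.
have := H _ _ h1; have := H _ _ h2; move: il; rewrite -val_eqE /=.
have := ltn_ord i; have := ltn_ord l; have := ltn_ord p; lia.
Qed.

Lemma pow_rowp n (A : 'M[R]_n) s : rowp A -> rowp A^T -> rowp (A ^+ s) /\ rowp (A ^+ s)^T.
Proof.
move=> h1 h2; elim: s => [|s [ih1 ih2]].
  by rewrite expr0; split; [exact: rowp1| rewrite trmx1; exact: rowp1].
rewrite exprS -mulmxE; split; first exact: rowp_mul.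
rewrite trmx_mul; exact: rowp_mul.
Qed.

Lemma canon_rowp n m (B : 'M[R]_(n, m)) : canonical_columns B -> rowp B^T.
Proof.
move=> hB p i l il; rewrite !mxE; have [q hq] := hB p.
have e : forall x, B x p = (x == q)%:R.
  by move=> x; have := congr1 (fun M : 'cV[R]_n => M x 0) hq; rewrite !mxE eqxx andbT.
rewrite !e; case: (eqVneq i q) => [<-|]; last by rewrite mul0r.
by rewrite eq_sym (negbTE il) mulr0.
Qed.

Lemma gram_isd n m (A : 'M[R]_n) (B : 'M[R]_(n, m)) T :
  ring_network A -> canonical_columns B -> isd (gramian A B T).
Proof.
move=> hA hB i j ij; rewrite /gramian summxE big1 // => t _.
have [h1 h2] := ring_rowp hA; have [_ h3] := pow_rowp t h1 h2.
have hX : rowp (A ^+ t *m B)^T by rewrite trmx_mul; apply: rowp_mul => //; exact: canon_rowp.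
rewrite -mulmxA -trmx_mul mxE big1 // => k _.
by have := hX k i j ij; rewrite !mxE.
Qed.
Lemma isd_inv a (W : 'M[R]_a) : isd W -> (forall i, W i i != 0) -> isd (invmx W).
Proof.
move=> hW nz.
pose D : 'M[R]_a := \matrix_(i, j) ((i == j)%:R * (W i i)^-1).
have WD : W *m D = 1%:M.
  apply/matrixP => i j; rewrite !mxE (bigD1 i) //= big1 ?addr0; last first.
    by move=> r ri; rewrite hW ?mul0r // eq_sym.
  rewrite !mxE; case: eqP => [_|_]; last by rewrite mul0r mulr0.
  by rewrite mul1r divff.
have [uW _] := mulmx1_unit WD.
have -> : invmx W = D by rewrite -[RHS](mulKmx uW) WD mulmx1.
by move=> i j ij; rewrite mxE (negbTE ij) mul0r.
Qed.

Lemma posdef_diag a (W : 'M[R]_a) : posdef W -> forall i, W i i != 0.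
Proof.
move=> [_ hW] i.
have nz : (delta_mx i 0 : 'cV[R]_a) != 0.
  apply/eqP => /matrixP/(_ i 0); rewrite !mxE eqxx /= => /eqP; by rewrite oner_eq0.
have := hW _ nz; rewrite trmx_delta -rowE -colE !mxE => h.
by rewrite gt_eqF.
Qed.
Lemma isd_eig a (W : 'M[R]_a) (v : 'cV[R]_a) lam : isd W -> W *m v = lam *: v ->
  mup lam (char_poly W) = 1%N -> isd (v *m v^T).
Proof.
move=> hW hv hm.
have ev : forall i, v i 0 != 0 -> W i i = lam.
  move=> i nz; have := congr1 (fun M : 'cV[R]_a => M i 0) hv.
  rewrite /= isd_diag_entry // mxE => /eqP; rewrite -subr_eq0 -mulrBl mulf_eq0 (negbTE nz) orbF.
  by rewrite subr_eq0 => /eqP.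
have mult : forall p p' : 'I_a, p != p' -> W p p = lam -> W p' p' = lam -> False.
  move=> p p' pp e1 e2.
  have tr : is_trig_mx W.
    by apply/is_trig_mxP => i j lt; apply: hW; rewrite -val_eqE /= ltn_eqF.
  move: hm; rewrite char_poly_trig //.
  rewrite -(big_map (fun i : 'I_a => W i i) xpredT (fun y => 'X - y%:P)) mu_prod_XsubC.
  rewrite count_map.
  have : (size [:: p; p'] <= size (filter (preim (fun i : 'I_a => W i i) (pred1 lam)) (index_enum 'I_a)))%N.
    apply: uniq_leq_size; first by rewrite /= inE pp.
    by move=> x; rewrite !inE mem_filter mem_index_enum andbT => /orP[]/eqP->/=; rewrite ?e1 ?e2.
  by rewrite size_filter /= => h e; rewrite e in h.
move=> i j ij; rewrite !mxE big_ord1 !mxE.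
case: (eqVneq (v i 0) 0) => [->|h1]; first by rewrite mul0r.
case: (eqVneq (v j 0) 0) => [->|h2]; first by rewrite mulr0.
by case: (mult _ _ ij (ev _ h1) (ev _ h2)).
Qed.
Lemma main_lem n m T (A : 'M[R]_n) (B : 'M[R]_(n, m)) (P : 'M[R]_n) :
  ring_network A -> canonical_columns B -> isd P ->
  forall i j : 'I_n, A i j = 0 -> ThetaP A P B T i j = 0.
Proof.
move=> hA hB hP i j Aij.
have [h1 h2] := ring_rowp hA.
have ent : forall (Y : 'M[R]_n) q r, (Y *m (delta_mx q 0 : 'cV[R]_n)) r 0 = Y r q.
  by move=> Y q r; rewrite -colE mxE.
rewrite /ThetaP summxE big1 // => k _; rewrite summxE big1 // => t _.
rewrite mxE big1 // => j' _; rewrite /Cbar /Obar mxE [X in _ * X]mxE.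
have [q hq] := hB k; rewrite hq.
set s := (t.-1 - j')%N.
have eA : A ^+ t = A ^+ s *m (A *m A ^+ j').
  rewrite !mulmxE -exprS -exprD; congr (_ ^+ _); rewrite /s; have := ltn_ord j'; lia.
rewrite eA.
have -> : (A ^+ s)^T *m P *m (A ^+ s *m (A *m A ^+ j')) *m (delta_mx q 0 : 'cV[R]_n)
   = ((A ^+ s)^T *m P *m A ^+ s) *m (A *m (A ^+ j' *m (delta_mx q 0 : 'cV[R]_n))) by rewrite !mulmxA.
have [hs _] := pow_rowp s h1 h2.
have [_ hj] := pow_rowp j' h1 h2.
rewrite isd_diag_entry; last exact: isd_tmt.
rewrite [(A *m _) i 0]mxE ent -mulrA mulr_suml big1 ?mulr0 // => r _.
rewrite ent -mulrA.
case: (eqVneq r j) => [->|rj]; first by rewrite Aij mul0r.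
by have := hj q r j rj; rewrite !mxE => ->; rewrite mulr0.
Qed.
End S.
Unset Implicit Arguments. Set Strict Implicit.

Theorem corollary4p3 (R : realFieldType) (n m T : nat) (A : 'M[R]_n)
  (B : 'M[R]_(n, m)) (P : 'M[R]_n) :
  (2 <= n)%N ->
  canonical_columns B ->
  posdef (gramian A B T) ->
  admissible_P (gramian A B T) P ->
  (line_network A ->
     forall i j : 'I_n, (i : nat) != j.+1 -> ThetaP A P B T i j = 0) /\
  (ring_network A ->
     forall i j : 'I_n, (i : nat) != j.+1 ->
       ~ ((i : nat) = 0%N /\ (j : nat) = n.-1) -> ThetaP A P B T i j = 0).
Proof.
move=> hn hB hpos hadm.
suff key : ring_network A -> forall i j, A i j = 0 -> ThetaP A P B T i j = 0.
  split=> [hL i j ij | hR i j ij nij].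
    by apply: key (hL i j ij) => a b ab _; exact: hL.
  by apply: key; [|exact: hR].
move=> hR i j Aij; apply: main_lem => //.
have hW := gram_isd T hR hB.
case: hadm => [->|[->|[->|[v [lam [e1 _ e3 ->]]]]]].
- by move=> a b ab; rewrite mxE (negbTE ab).
- exact: isd_inv hW (posdef_diag hpos).
- by apply: isd_mul; exact: isd_inv hW (posdef_diag hpos).
- exact: isd_eig hW e1 e3.
Qed.
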